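(* Let $n\ge2$ be an integer, $\alpha=1-\frac1n$, and let $\beta\le0$ be real with $Q\equiv\alpha-\beta-1\le1$. There is a constant $C_n>0$ depending only on $n$ such that for all such $\beta$ and all $y\le-1$, $$C_n^{-1}e^y(-y)^{\beta-\alpha}\le\mathcal{T}(\beta,\alpha,y)\le e^y(-y)^{\beta-\alpha},\qquad C_n^{-1}(-y)^{-\beta}\le\mathcal{M}(\beta,\alpha,y)\le C_n(-y)^{-\beta}.$$
   Context: $(x)_k=\prod_{m=1}^k(x+m-1)$, $(x)_0=1$. $\mathcal{M}(\beta,\alpha,y)=\sum_{k\ge0}\frac{(\beta)_k}{(\alpha)_k}\frac{y^k}{k!}$. For $y<0$, $\mathcal{T}(\beta,\alpha,y)=\frac{e^y}{\Gamma(\alpha-\beta)}\int_0^\infty e^{yt}t^{\alpha-\beta-1}(1+t)^{\beta-1}dt$. *)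

(* Defs.v *)
From Stdlib Require Import Reals Factorial.
From Coquelicot Require Import Coquelicot.
Open Scope R_scope.

Fixpoint poch (x : R) (k : nat) : R :=
  match k with
  | O => 1
  | S k' => poch x k' * (x + INR k')
  end.

Definition kummerM (beta alpha y : R) : R :=
  Series (fun k => poch beta k / poch alpha k * y ^ k / INR (fact k)).

Definition Gamma (s : R) : R :=
  RInt_gen (fun t => exp (- t) * Rpower t (s - 1))
           (at_right 0) (Rbar_locally p_infty).

Definition kummerT (beta alpha y : R) : R :=
  exp y / Gamma (alpha - beta) *
  RInt_gen (fun t => exp (y * t) * Rpower t (alpha - beta - 1) * Rpower (1 + t) (beta - 1))
           (at_right 0) (Rbar_locally p_infty).

(* Main.v *)
Require Import Defs.
From Stdlib Require Import Reals Lra Lia Factorial.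
From Coquelicot Require Import Coquelicot.
Open Scope R_scope.


Section SupInt.
Variable f : R -> R.
Hypothesis Hc : forall t, 0 < t -> continuous f t.
Hypothesis Hp : forall t, 0 < t -> 0 <= f t.

Lemma exRI a b : 0 < a -> a <= b -> ex_RInt f a b.
Proof.
  intros Ha Hab. apply (@ex_RInt_continuous R_CompleteNormedModule). intros z Hz.
  rewrite Rmin_left in Hz by lra. apply Hc; lra.
Qed.

Lemma RI_ge0 a b : 0 < a -> a <= b -> 0 <= RInt f a b.
Proof.
  intros Ha Hab. apply RInt_ge_0; auto. apply exRI; auto.
  intros x Hx; apply Hp; lra.
Qed.

Lemma RI_mono a' a b b' : 0 < a' -> a' <= a -> a <= b -> b <= b' ->
  RInt f a b <= RInt f a' b'.
Proof.
  intros H1 H2 H3 H4.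
  rewrite <- (RInt_Chasles f a' a b') by (apply exRI; lra).
  rewrite <- (RInt_Chasles f a b b') by (apply exRI; lra).
  pose proof (RI_ge0 a' a) as X; pose proof (RI_ge0 b b') as Y.
  change plus with Rplus. assert (0<=RInt f a' a) by (apply X; lra).
  assert (0 <= RInt f b b') by (apply Y; lra). lra.
Qed.

Definition upos (L : R) :=
  (forall a b, 0 < a -> a <= b -> RInt f a b <= L) /\
  (forall eps, 0 < eps -> exists a b, 0 < a /\ a <= b /\ L - eps < RInt f a b).

Lemma upos_exists K : (forall a b, 0 < a -> a <= b -> RInt f a b <= K) ->
  exists L, upos L.
Proof.
  intros HK.
  set (E := fun v => exists a b, 0 < a /\ a <= b /\ v = RInt f a b).
  assert (Hb : bound E).
  { exists K. intros v [a [b [H1 [H2 ->]]]]. apply HK; auto. }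
  assert (Hne : exists x, E x).
  { exists (RInt f 1 1). exists 1, 1. repeat split; lra. }
  destruct (completeness E Hb Hne) as [L [HL1 HL2]].
  exists L. split.
  - intros a b Ha Hab. apply HL1. exists a, b; auto.
  - intros eps He. apply Classical_Pred_Type.not_all_not_ex. intros Hn.
    assert (L <= L - eps); [|lra].
    apply HL2. intros v [a [b [H1 [H2 ->]]]].
    specialize (Hn a). apply Rnot_lt_le. intros Hlt. apply Hn. exists b. auto.
Qed.

Lemma upos_RInt_gen L : upos L -> RInt_gen f (at_right 0) (Rbar_locally p_infty) = L.
Proof.
  intros [U1 U2]. apply is_RInt_gen_unique.
  intros P [eps Heps].
  destruct (U2 eps (cond_pos eps)) as [a0 [b0 [Ha0 [Hab0 Hl]]]].
  apply Filter_prod with (Q := fun a => 0 < a < a0) (R := fun b => b0 < b).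
  - exists (mkposreal a0 Ha0). intros y Hy Hy0. simpl in *.
    unfold ball in Hy; simpl in Hy; unfold AbsRing_ball, abs, minus, plus, opp in Hy; simpl in Hy.
    apply Rabs_def2 in Hy. lra.
  - exists b0. auto.
  - intros a b Ha Hb. exists (RInt f a b). split.
    + simpl. apply RInt_correct. apply exRI; lra.
    + apply Heps. simpl. unfold ball; simpl; unfold AbsRing_ball, abs, minus, plus, opp; simpl.
      assert (RInt f a0 b0 <= RInt f a b) by (apply RI_mono; lra).
      assert (RInt f a b <= L) by (apply U1; lra).
      apply Rabs_def1; lra.
Qed.

End SupInt.


Lemma exp_le_mono x y : x <= y -> exp x <= exp y.
Proof. intros H; destruct (Rle_lt_or_eq_dec _ _ H) as [h| e]; [|rewrite e]; [left; apply exp_increasing; auto | lra]. Qed.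

Lemma Rpower_pos x c : 0 < Rpower x c.
Proof. unfold Rpower; apply exp_pos. Qed.

Lemma Rpower_le_exp_small t c1 c2 : 0 < t <= 1 -> c1 <= c2 -> Rpower t c2 <= Rpower t c1.
Proof.
  intros Ht Hc. unfold Rpower. apply exp_le_mono.
  assert (ln t <= 0). { rewrite <- ln_1. apply ln_le; lra. }
  nra.
Qed.

Lemma Rpower_le_base_neg a b c : c <= 0 -> 0 < a <= b -> Rpower b c <= Rpower a c.
Proof.
  intros Hc Hab. unfold Rpower. apply exp_le_mono.
  assert (ln a <= ln b) by (apply ln_le; lra). nra.
Qed.

Lemma Rpower_cont c t : 0 < t -> continuous (fun t => Rpower t c) t.
Proof.
  intros Ht. apply (@ex_derive_continuous R_AbsRing R_NormedModule). exists (c * Rpower t (c - 1)).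
  apply is_derive_Reals. apply derivable_pt_lim_power. auto.
Qed.

Lemma Rpower_2 x : 0 < x -> Rpower x 2 = x ^ 2.
Proof. intros; replace 2 with (INR 2) by (simpl; lra). apply Rpower_pow; auto. Qed.

Lemma Rpower_1_base' c : Rpower 1 c = 1.
Proof. unfold Rpower. rewrite ln_1, Rmult_0_r. apply exp_0. Qed.


Definition gI (a t : R) := exp (- t) * Rpower t (a - 1).

Lemma exp_cont x : continuous exp x.
Proof. apply (@ex_derive_continuous R_AbsRing R_NormedModule). auto_derive; auto. Qed.

Lemma gI_cont a t : 0 < t -> continuous (gI a) t.
Proof.
  intros Ht. unfold gI. apply (@continuous_mult R_UniformSpace R_AbsRing).
  - apply (@ex_derive_continuous R_AbsRing R_NormedModule). auto_derive; auto.
  - apply Rpower_cont; auto.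
Qed.

Lemma gI_pos a t : 0 <= gI a t.
Proof. unfold gI. pose proof (exp_pos (-t)); pose proof (Rpower_pos t (a-1)). nra. Qed.

Lemma Rpower_1_base c : Rpower 1 c = 1.
Proof. unfold Rpower. rewrite ln_1, Rmult_0_r. apply exp_0. Qed.

Lemma RInt_sqrt_part m : 0 < m <= 1 -> RInt (fun t => Rpower t (-1/2)) m 1 <= 2.
Proof.
  intros Hm.
  assert (H : is_RInt (fun t => Rpower t (-1/2)) m 1
                (minus ((fun t => 2 * Rpower t (1/2)) 1) ((fun t => 2 * Rpower t (1/2)) m))).
  { apply (@is_RInt_derive R_CompleteNormedModule (fun t => 2 * Rpower t (1/2))).
    - intros x Hx. rewrite Rmin_left in Hx by lra. rewrite Rmax_right in Hx by lra.
      apply is_derive_Reals.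
      replace (Rpower x (-1/2)) with (2 * ((1/2) * Rpower x (1/2 - 1))).
      + apply derivable_pt_lim_scal. apply derivable_pt_lim_power. lra.
      + replace (1/2 - 1) with (-1/2) by lra. field.
    - intros x Hx. rewrite Rmin_left in Hx by lra. apply Rpower_cont. lra. }
  apply (@is_RInt_unique R_CompleteNormedModule) in H. rewrite H. simpl. unfold minus, plus, opp; simpl.
  rewrite Rpower_1_base. pose proof (Rpower_pos m (1/2)). lra.
Qed.

Lemma e_ge_2 : 2 <= exp 1.
Proof. pose proof (exp_ineq1_le 1). lra. Qed.

Lemma RInt_exp_part M : 1 <= M -> RInt (fun t => exp (- t) * t) 1 M <= 1.
Proof.
  intros HM.
  assert (H : is_RInt (fun t => exp (- t) * t) 1 M
                (minus ((fun t => - (t + 1) * exp (- t)) M) ((fun t => - (t + 1) * exp (- t)) 1))).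
  { apply (@is_RInt_derive R_CompleteNormedModule (fun t => - (t + 1) * exp (- t))).
    - intros x Hx. auto_derive; auto. ring.
    - intros x Hx. apply (@ex_derive_continuous R_AbsRing R_NormedModule). auto_derive; auto. }
  apply (@is_RInt_unique R_CompleteNormedModule) in H. rewrite H. simpl. unfold minus, plus, opp; simpl.
  pose proof (exp_pos (-M)).
  assert (Hem : exp (- (1)) <= /2).
  { rewrite exp_Ropp. pose proof e_ge_2. apply Rinv_le_contravar; lra. }
  nra.
Qed.

Section G.
Variable a : R.
Hypothesis Ha : 1/2 <= a <= 2.

Lemma gI_bound a' b' : 0 < a' -> a' <= b' -> RInt (gI a) a' b' <= 3.
Proof.
  intros H1 H2.
  set (m := Rmin a' 1). set (M := Rmax b' 1).
  assert (Hm : 0 < m <= 1) by (unfold m; split; [apply Rmin_case; lra | apply Rmin_r]).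
  assert (HM : 1 <= M) by (unfold M; apply Rmax_r).
  assert (RInt (gI a) a' b' <= RInt (gI a) m M).
  { apply RI_mono; try (intros; apply gI_cont); try (intros; apply gI_pos); try lra.
    unfold m; apply Rmin_l. unfold M; apply Rmax_l. }
  rewrite <- (RInt_Chasles (gI a) m 1 M) in H by (apply exRI; try (intros; apply gI_cont; lra); lra).
  assert (RInt (gI a) m 1 <= RInt (fun t => Rpower t (-1/2)) m 1).
  { apply RInt_le; try lra. apply exRI; try (intros; apply gI_cont; lra); lra.
    apply (exRI (fun t => Rpower t (-1/2))); try (intros; apply Rpower_cont; lra); lra.
    intros x Hx. unfold gI.
    assert (exp (-x) <= 1) by (rewrite <- exp_0; apply exp_le_mono; lra).
    assert (Rpower x (a-1) <= Rpower x (-1/2)) by (apply Rpower_le_exp_small; lra).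
    pose proof (Rpower_pos x (a-1)). nra. }
  assert (RInt (gI a) 1 M <= RInt (fun t => exp (- t) * t) 1 M).
  { apply RInt_le; try lra. apply exRI; try (intros; apply gI_cont; lra); lra.
    apply (@ex_RInt_continuous R_CompleteNormedModule). intros z Hz.
    apply (@ex_derive_continuous R_AbsRing R_NormedModule). auto_derive; auto.
    intros x Hx. unfold gI.
    assert (Rpower x (a-1) <= Rpower x 1) by (apply Rle_Rpower; lra).
    rewrite Rpower_1 in H3 by lra.
    pose proof (exp_pos (-x)). nra. }
  pose proof (RInt_sqrt_part m Hm). pose proof (RInt_exp_part M HM).
  change plus with Rplus in H. lra.
Qed.

Lemma gI_lower : exp (-2) / 2 <= RInt (gI a) 1 2.
Proof.
  replace (exp (-2) / 2) with (RInt (fun _ => exp (-2) / 2) 1 2).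
  2:{ rewrite RInt_const. simpl. unfold scal; simpl; unfold mult; simpl. ring. }
  apply RInt_le; try lra. apply ex_RInt_const.
  apply exRI; try (intros; apply gI_cont; lra); lra.
  intros x Hx. unfold gI.
  assert (exp (-2) <= exp (-x)) by (apply exp_le_mono; lra).
  assert (Rpower x (-1/2) <= Rpower x (a-1)) by (apply Rle_Rpower; lra).
  assert (/2 <= Rpower x (-1/2)).
  { replace (-1/2) with (- (1/2)) by field. rewrite Rpower_Ropp.
    assert (Rpower x (1/2) <= Rpower x 1) by (apply Rle_Rpower; lra).
    rewrite Rpower_1 in H1 by lra. pose proof (Rpower_pos x (1/2)).
    apply Rinv_le_contravar; lra. }
  pose proof (exp_pos (-2)). nra.
Qed.

Lemma Gamma_upos : exists G, upos (gI a) G /\ exp (-2) / 2 <= G <= 3.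
Proof.
  destruct (upos_exists (gI a) 3 gI_bound) as [G HG].
  exists G. split; auto. destruct HG as [U1 U2]. split.
  - eapply Rle_trans; [apply gI_lower | apply U1; lra].
  - apply Rnot_lt_le; intros Hlt.
    destruct (U2 (G - 3)) as [a' [b' [h1 [h2 h3]]]]; try lra.
    pose proof (gI_bound a' b' h1 h2). lra.
Qed.

End G.


Section T.
Variables al be y : R.
Hypothesis Hal : 1/2 <= al < 1.
Hypothesis Hbe : al - 2 <= be <= 0.
Hypothesis Hy : y <= -1.

Let a := al - be.
Let x := - y.

Definition hT (t : R) := exp (y * t) * Rpower t (al - be - 1) * Rpower (1 + t) (be - 1).

Lemma hT_cont t : 0 < t -> continuous hT t.
Proof.
  intros Ht. apply (@ex_derive_continuous R_AbsRing R_NormedModule).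
  unfold hT, Rpower. auto_derive. lra.
Qed.

Lemma hT_pos t : 0 < t -> 0 <= hT t.
Proof.
  intros. unfold hT. pose proof (exp_pos (y*t)). pose proof (Rpower_pos t (al-be-1)).
  pose proof (Rpower_pos (1+t) (be-1)). apply Rmult_le_pos; [apply Rmult_le_pos|]; lra.
Qed.

Lemma Rpower_x_split t c : 0 < t -> Rpower t c = Rpower x (- c) * Rpower (x * t) c.
Proof.
  intros Ht. unfold x. rewrite <- Rpower_mult_distr by lra. rewrite Rpower_Ropp.
  field. apply Rgt_not_eq, Rpower_pos.
Qed.

Lemma hT_le t : 0 < t -> hT t <= Rpower x (- a) * scal x (gI a (x * t + 0)).
Proof.
  intros Ht. unfold hT, gI, scal; simpl; unfold mult; simpl.
  rewrite Rplus_0_r.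
  assert (Rpower (1 + t) (be - 1) <= 1).
  { assert (Rpower (1+t) (be-1) <= Rpower (1+t) 0) by (apply Rle_Rpower; lra).
    rewrite Rpower_O in H by lra. exact H. }
  rewrite (Rpower_x_split t) by lra.
  replace (- (x*t)) with (y * t) by (unfold x; ring).
  replace (al - be - 1) with (a - 1) by (unfold a; ring).
  assert (Rpower x (- (a - 1)) = Rpower x (- a) * x).
  { replace (- (a-1)) with (- a + 1) by ring. rewrite Rpower_plus, Rpower_1; unfold x; lra. }
  rewrite H0.
  pose proof (exp_pos (y*t)). pose proof (Rpower_pos (x*t) (a-1)). pose proof (Rpower_pos x (-a)).
  assert (0 < x) by (unfold x; lra).
  pose proof (Rpower_pos (1+t) (be-1)).
  assert (0 <= exp (y * t) * (Rpower x (- a) * x * Rpower (x * t) (a - 1))).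
  { apply Rmult_le_pos; [lra|]. apply Rmult_le_pos; [|lra]. apply Rmult_le_pos; lra. }
  nra.
Qed.

Lemma hT_bound G : upos (gI a) G -> forall a' b', 0 < a' -> a' <= b' ->
  RInt hT a' b' <= Rpower x (- a) * G.
Proof.
  intros [U1 _] a' b' H1 H2.
  assert (Hx : 1 <= x) by (unfold x; lra).
  assert (Ha : 1/2 <= a <= 2) by (unfold a; lra).
  assert (Hex : ex_RInt (gI a) (x * a' + 0) (x * b' + 0)).
  { apply exRI. intros; apply gI_cont; auto. nra. nra. }
  eapply Rle_trans.
  { apply RInt_le with (g := fun t => scal (Rpower x (- a)) (scal x (gI a (x * t + 0)))); auto.
    apply exRI; auto. apply hT_cont.
    apply (@ex_RInt_scal R_NormedModule). apply (@ex_RInt_comp_lin R_NormedModule). auto.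
    intros t Ht. apply hT_le. lra. }
  rewrite (@RInt_scal R_CompleteNormedModule).
  2:{ apply (@ex_RInt_comp_lin R_NormedModule). auto. }
  rewrite (@RInt_comp_lin R_CompleteNormedModule) by auto.
  unfold scal; simpl; unfold mult; simpl.
  apply Rmult_le_compat_l. left; apply Rpower_pos.
  apply U1; nra.
Qed.

Lemma hT_lower : exp (-1) / 32 * Rpower x (- a) <= RInt hT (/ (2 * x)) (/ x).
Proof.
  assert (Hx : 1 <= x) by (unfold x; lra).
  assert (Ha : 1/2 <= a <= 2) by (unfold a; lra).
  set (c := exp (-1) * (Rpower x (1 - a) / 2) * / 8).
  assert (E : exp (-1) / 32 * Rpower x (- a) = RInt (fun _ => c) (/ (2 * x)) (/ x)).
  { rewrite RInt_const. unfold scal; simpl; unfold mult; simpl. unfold c.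
    replace (1 - a) with (1 + - a) by ring. rewrite Rpower_plus, Rpower_1 by lra.
    field. lra. }
  rewrite E. apply RInt_le.
  - apply Rinv_le_contravar; lra.
  - apply ex_RInt_const.
  - apply exRI. apply hT_cont. apply Rinv_0_lt_compat; lra. apply Rinv_le_contravar; lra.
  - intros t Ht.
    assert (Ht0 : 0 < t). { pose proof (Rinv_0_lt_compat (2*x)). lra. }
    assert (Hxt1 : x * t <= 1).
    { destruct Ht as [_ Ht]. apply Rmult_lt_compat_l with (r := x) in Ht; [|lra].
      rewrite Rinv_r in Ht; lra. }
    assert (Hxt2 : 1/2 <= x * t).
    { destruct Ht as [Ht _]. apply Rmult_lt_compat_l with (r := x) in Ht; [|lra].
      replace (x * / (2*x)) with (1/2) in Ht by (field; lra). lra. }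
    unfold hT, c.
    assert (A1 : exp (-1) <= exp (y * t)).
    { apply exp_le_mono. replace (y*t) with (- (x*t)) by (unfold x; ring). lra. }
    assert (A2 : Rpower x (1 - a) / 2 <= Rpower t (al - be - 1)).
    { rewrite (Rpower_x_split t) by lra. replace (- (al - be - 1)) with (1 - a) by (unfold a; ring).
      assert (1/2 <= Rpower (x * t) (al - be - 1)).
      { eapply Rle_trans; [|apply (Rpower_le_exp_small _ _ 1)]; try lra.
        rewrite Rpower_1; nra. }
      pose proof (Rpower_pos x (1-a)). nra. }
    assert (A3 : / 8 <= Rpower (1 + t) (be - 1)).
    { assert (t <= 1).
      { assert (/x <= 1). { rewrite <- Rinv_1. apply Rinv_le_contravar; lra. } lra. }
      eapply Rle_trans; [|apply (Rpower_le_base_neg _ 2)]; try lra.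
      replace (be - 1) with (- (1 - be)) by ring. rewrite Rpower_Ropp.
      apply Rinv_le_contravar. apply Rpower_pos.
      replace 8 with (2 ^ 3) by ring. rewrite <- Rpower_pow by lra.
      apply Rle_Rpower; simpl; lra. }
    pose proof (exp_pos (-1)). pose proof (Rpower_pos x (1-a)).
    apply Rmult_le_compat; try lra.
    + apply Rmult_le_pos; lra.
    + apply Rmult_le_compat; lra.
Qed.

Lemma T_bounds :
  / 288 * exp y * Rpower (- y) (be - al) <= kummerT be al y /\
  kummerT be al y <= exp y * Rpower (- y) (be - al).
Proof.
  assert (Ha : 1/2 <= a <= 2) by (unfold a; lra).
  destruct (Gamma_upos a Ha) as [G [HG [HG1 HG2]]].
  assert (EG : Gamma (al - be) = G).
  { unfold Gamma. apply (upos_RInt_gen (gI a)); auto.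
    intros; apply gI_cont; auto. intros; apply gI_pos. }
  destruct (upos_exists hT (Rpower x (- a) * G) (hT_bound G HG)) as [L HL].
  assert (EL : RInt_gen hT (at_right 0) (Rbar_locally p_infty) = L).
  { apply upos_RInt_gen; auto. apply hT_cont. apply hT_pos. }
  unfold kummerT. fold hT. 
  change (fun t => exp (y * t) * Rpower t (al - be - 1) * Rpower (1 + t) (be - 1)) with hT.
  rewrite EG, EL.
  replace (be - al) with (- a) by (unfold a; ring). fold x.
  assert (Hx : 1 <= x) by (unfold x; lra).
  assert (HLu : L <= Rpower x (- a) * G).
  { destruct HL as [_ U2]. apply Rnot_lt_le; intros Hlt.
    destruct (U2 (L - Rpower x (- a) * G)) as [a' [b' [h1 [h2 h3]]]]; try lra.
    pose proof (hT_bound G HG a' b' h1 h2). lra. }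
  assert (HLl : exp (-1) / 32 * Rpower x (- a) <= L).
  { eapply Rle_trans; [apply hT_lower|]. destruct HL as [U1 _]. apply U1.
    apply Rinv_0_lt_compat; lra. apply Rinv_le_contravar; lra. }
  pose proof (exp_pos y). pose proof (Rpower_pos x (-a)).
  assert (HG0 : 0 < G) by (pose proof (exp_pos (-2)); lra).
  assert (He : / 3 <= exp (-1)).
  { replace (-1) with (- (1)) by ring. rewrite exp_Ropp. apply Rinv_le_contravar. apply exp_pos. apply exp_le_3. }
  assert (Q1 : /288 * Rpower x (-a) <= L / G).
  { apply Rmult_le_reg_l with G; auto.
    replace (G * (L / G)) with L by (field; lra).
    assert (G * (/288 * Rpower x (-a)) <= 3 * (/288 * Rpower x (-a))) by (apply Rmult_le_compat_r; lra).
    assert (/3 * Rpower x (-a) <= exp (-1) * Rpower x (-a)) by (apply Rmult_le_compat_r; lra).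
    lra. }
  assert (Q2 : L / G <= Rpower x (-a)).
  { apply Rmult_le_reg_l with G; auto.
    replace (G * (L / G)) with L by (field; lra). lra. }
  replace (exp y / G * L) with (exp y * (L / G)) by (field; lra).
  split.
  - rewrite (Rmult_comm (/288)), Rmult_assoc. apply Rmult_le_compat_l; lra.
  - apply Rmult_le_compat_l; lra.
Qed.

End T.


Lemma poch_front x k : poch x (S k) = x * poch (x + 1) k.
Proof.
  induction k as [|k IH].
  - simpl. ring.
  - change (poch x (S (S k))) with (poch x (S k) * (x + INR (S k))).
    rewrite IH. change (poch (x+1) (S k)) with (poch (x+1) k * (x + 1 + INR k)).
    rewrite S_INR. ring.
Qed.

Lemma poch_pos x k : 0 < x -> 0 < poch x k.
Proof.
  intros Hx; induction k as [|k IH]; simpl. lra.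
  apply Rmult_lt_0_compat; auto. pose proof (pos_INR k); lra.
Qed.

Definition Cb (n j : nat) : R := if (j <=? n)%nat then Binomial.C n j else 0.

Lemma Cb_0 n : Cb n 0 = 1.
Proof. unfold Cb; simpl. unfold Binomial.C. rewrite Nat.sub_0_r. simpl. field. apply INR_fact_neq_0. Qed.

Lemma Cb_pascal n j : Cb (S n) (S j) = Cb n j + Cb n (S j).
Proof.
  unfold Cb. destruct (Nat.lt_trichotomy j n) as [h|[h|h]].
  - replace (S j <=? S n)%nat with true by (symmetry; apply Nat.leb_le; lia).
    replace (j <=? n)%nat with true by (symmetry; apply Nat.leb_le; lia).
    replace (S j <=? n)%nat with true by (symmetry; apply Nat.leb_le; lia).
    symmetry; apply pascal; auto.
  - subst. rewrite Nat.leb_refl. replace (S n <=? S n)%nat with true by (symmetry; apply Nat.leb_le; lia).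
    replace (S n <=? n)%nat with false by (symmetry; apply Nat.leb_gt; lia).
    unfold Binomial.C. rewrite !Nat.sub_diag. simpl (Factorial.fact 0). idtac.
    rewrite ?Nat.leb_refl. change (INR 1) with 1. field. split; apply INR_fact_neq_0.
  - replace (S j <=? S n)%nat with false by (symmetry; apply Nat.leb_gt; lia).
    replace (j <=? n)%nat with false by (symmetry; apply Nat.leb_gt; lia).
    replace (S j <=? n)%nat with false by (symmetry; apply Nat.leb_gt; lia). ring.
Qed.

Lemma Cb_out n : Cb n (S n) = 0.
Proof. unfold Cb. replace (S n <=? n)%nat with false by (symmetry; apply Nat.leb_gt; lia). auto. Qed.

Lemma sum_shift f n : sum_f_R0 f (S n) = f 0%nat + sum_f_R0 (fun j => f (S j)) n.
Proof.
  induction n as [|n IH]. simpl. ring.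
  rewrite tech5, IH. rewrite (tech5 (fun j => f (S j))). ring.
Qed.

Lemma sum_plus f g n : sum_f_R0 (fun j => f j + g j) n = sum_f_R0 f n + sum_f_R0 g n.
Proof. induction n; simpl; [ring| rewrite IHn; ring]. Qed.

Lemma sum_scal c f n : sum_f_R0 (fun j => c * f j) n = c * sum_f_R0 f n.
Proof. induction n; simpl; [ring| rewrite IHn; ring]. Qed.

Definition Ssum (n : nat) (A al : R) :=
  sum_f_R0 (fun j => Cb n j * (-1) ^ j * (poch A j / poch al j)) n.

Lemma Ssum_id n : forall A al, 0 < al -> Ssum n A al = poch (al - A) n / poch al n.
Proof.
  induction n as [|n IH]; intros A al Hal.
  - unfold Ssum. simpl. rewrite Cb_0. field.
  - unfold Ssum. rewrite sum_shift.
    pose proof (poch_pos al n Hal) as P1. pose proof (poch_pos (al+1) n ltac:(lra)) as P2.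
    assert (E : sum_f_R0 (fun j => Cb (S n) (S j) * (-1) ^ S j * (poch A (S j) / poch al (S j))) n
               = - (A / al) * Ssum n (A + 1) (al + 1)
                 + sum_f_R0 (fun j => Cb n (S j) * (-1) ^ S j * (poch A (S j) / poch al (S j))) n).
    { unfold Ssum. rewrite <- sum_scal, <- sum_plus. apply sum_eq. intros j _.
      rewrite Cb_pascal, !poch_front. simpl pow.
      pose proof (poch_pos (al+1) j ltac:(lra)). field. split; lra. }
    rewrite E. clear E.
    assert (E2 : Cb (S n) 0 * (-1) ^ 0 * (poch A 0 / poch al 0) +
                 sum_f_R0 (fun j => Cb n (S j) * (-1) ^ S j * (poch A (S j) / poch al (S j))) n
               = Ssum n A al).
    { rewrite Cb_0. unfold Ssum.
      pose proof (sum_shift (fun j => Cb n j * (-1) ^ j * (poch A j / poch al j)) n) as H.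
      rewrite tech5, Cb_out in H. simpl in H. rewrite Cb_0 in H. simpl. lra. }
    replace (Cb (S n) 0 * (-1) ^ 0 * (poch A 0 / poch al 0) +
      (- (A / al) * Ssum n (A + 1) (al + 1) +
       sum_f_R0 (fun j => Cb n (S j) * (-1) ^ S j * (poch A (S j) / poch al (S j))) n))
      with (- (A / al) * Ssum n (A + 1) (al + 1) + Ssum n A al) by lra.
    rewrite !IH by lra.
    replace (al + 1 - (A + 1)) with (al - A) by ring.
    assert (Q : poch (al + 1) n = poch al n * (al + INR n) / al).
    { pose proof (poch_front al n). simpl in H. field_simplify_eq; [|lra]. lra. }
    rewrite Q. simpl.
    assert (0 < al + INR n) by (pose proof (pos_INR n); lra).
    field. repeat split; lra.
Qed.


Lemma exp_series y : is_series (fun k => y ^ k / INR (fact k)) (exp y).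
Proof.
  pose proof (is_exp_Reals y) as H. unfold is_pseries in H.
  eapply is_series_ext; [|exact H]. intros n. simpl.
  rewrite pow_n_pow. unfold scal; simpl; unfold mult; simpl. unfold Rdiv. ring.
Qed.

Lemma exp_series_abs y : ex_series (fun k => Rabs (y ^ k / INR (fact k))).
Proof.
  exists (exp (Rabs y)). eapply is_series_ext; [|apply (exp_series (Rabs y))].
  intros n. rewrite Rabs_div, <- RPow_abs, (Rabs_right (INR _)); auto.
  apply Rle_ge, pos_INR. apply INR_fact_neq_0.
Qed.

Lemma kummer_transf al A y (a : nat -> R) :
  0 < al ->
  (forall k, a k = poch A k / poch al k * (- y) ^ k / INR (fact k)) ->
  ex_series a -> (forall k, 0 <= a k) ->
  kummerM (al - A) al y = exp y * Series a.
Proof.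
  intros Hal Ha Hex Hpos.
  pose proof (is_series_mult a (fun k => y ^ k / INR (fact k)) (Series a) (exp y)
     (Series_correct a Hex) (exp_series y)) as H.
  assert (Hab : ex_series (fun n => Rabs (a n))).
  { eapply ex_series_ext; [|exact Hex]. intros n. rewrite Rabs_right; auto. apply Rle_ge; auto. }
  specialize (H Hab (exp_series_abs y)).
  unfold kummerM. rewrite Rmult_comm. apply is_series_unique.
  eapply is_series_ext; [|exact H]. intros n. simpl.
  transitivity (y ^ n / INR (fact n) * Ssum n A al).
  - unfold Ssum. rewrite <- sum_scal. apply sum_eq. intros k Hk.
    rewrite Ha. unfold Cb. replace (k <=? n)%nat with true by (symmetry; apply Nat.leb_le; lia).
    unfold Binomial.C.
    replace (y ^ n) with (y ^ k * y ^ (n - k)) by (rewrite <- pow_add; f_equal; lia).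
    replace ((- y) ^ k) with ((-1) ^ k * y ^ k) by (rewrite <- Rpow_mult_distr; f_equal; ring).
    pose proof (INR_fact_neq_0 k). pose proof (INR_fact_neq_0 (n - k)). pose proof (INR_fact_neq_0 n).
    pose proof (poch_pos al k Hal).
    field. repeat split; lra.
  - rewrite Ssum_id by auto. replace (al - (al - A)) with A by ring. 
    pose proof (INR_fact_neq_0 n). pose proof (poch_pos al n Hal). field. split; lra.
Qed.


Lemma ln_le_x1 z : 0 < z -> ln z <= z - 1.
Proof.
  intros Hz. pose proof (exp_ineq1_le (z - 1)).
  rewrite <- (ln_exp (z - 1)). apply ln_le; lra.
Qed.

Lemma ln1p_bounds v : 0 <= v -> v - v ^ 2 <= ln (1 + v) <= v.
Proof.
  intros Hv. split.
  - assert (H : ln (/ (1 + v)) <= / (1 + v) - 1) by (apply ln_le_x1; apply Rinv_0_lt_compat; lra).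
    rewrite ln_Rinv in H by lra.
    assert (v / (1 + v) >= v - v ^ 2).
    { apply Rle_ge. apply Rmult_le_reg_r with (1 + v); [lra|].
      unfold Rdiv. rewrite Rmult_assoc, Rinv_l, Rmult_1_r by lra. nra. }
    assert (/ (1 + v) - 1 = - (v / (1 + v))) by (field; lra). lra.
  - pose proof (ln_le_x1 (1 + v)). lra.
Qed.

Section Poch.
Variables al d : R.
Hypothesis Hal : 1/2 <= al < 1.
Hypothesis Hd : 0 <= d <= 3/2.

Definition rr k := poch (al + d) k / poch al k.
Definition ww k := Rpower ((INR k + al) / al) d.
Definition uu k := / (al + INR k).
Definition bb k := match k with O => 0 | S k => 3 * (4 + / al - / (al + INR k)) end.

Lemma step_up u : 0 < u -> 1 + d * u <= Rpower (1 + u) d * exp (3 * u ^ 2).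
Proof.
  intros Hu. unfold Rpower. rewrite <- exp_plus.
  rewrite <- (exp_ln (1 + d * u)) by nra. apply exp_le_mono.
  destruct (ln1p_bounds (d * u)) as [_ H1]; [nra|].
  destruct (ln1p_bounds u) as [H2 _]; [lra|].
  nra.
Qed.

Lemma step_lo u : 0 < u -> Rpower (1 + u) d * exp (- (3 * u ^ 2)) <= 1 + d * u.
Proof.
  intros Hu. unfold Rpower. rewrite <- exp_plus.
  rewrite <- (exp_ln (1 + d * u)) by nra. apply exp_le_mono.
  destruct (ln1p_bounds (d * u)) as [H1 _]; [nra|].
  destruct (ln1p_bounds u) as [_ H2]; [lra|].
  assert (d ^ 2 <= 3) by nra.
  nra.
Qed.

Lemma uu_pos k : 0 < uu k.
Proof. unfold uu. apply Rinv_0_lt_compat. pose proof (pos_INR k); lra. Qed.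

Lemma rr_S k : rr (S k) = rr k * (1 + d * uu k).
Proof.
  unfold rr, uu. simpl. pose proof (pos_INR k). pose proof (poch_pos al k ltac:(lra)).
  field. split; lra.
Qed.

Lemma ww_S k : ww (S k) = ww k * Rpower (1 + uu k) d.
Proof.
  unfold ww, uu. pose proof (pos_INR k).
  rewrite Rpower_mult_distr.
  - f_equal. rewrite S_INR. field. split; lra.
  - apply Rmult_lt_0_compat; [lra|]. apply Rinv_0_lt_compat; lra.
  - assert (0 < / (al + INR k)) by (apply Rinv_0_lt_compat; lra). lra.
Qed.

Lemma bb_S k : bb k + 3 * uu k ^ 2 <= bb (S k).
Proof.
  unfold uu. destruct k as [|k].
  - simpl. rewrite Rplus_0_r. 
    assert (/ al <= 2). { replace 2 with (/ (1/2)) by field. apply Rinv_le_contravar; lra. }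
    assert (0 < / al) by (apply Rinv_0_lt_compat; lra).
    replace (/ (al + 0)) with (/ al) by (f_equal; ring). 
    replace (4 + / al - / al) with 4 by ring. nra.
  - change (bb (S (S k))) with (3 * (4 + / al - / (al + INR (S k)))). change (bb (S k)) with (3 * (4 + / al - / (al + INR k))). rewrite S_INR. pose proof (pos_INR k).
    assert ((/ (al + (INR k + 1))) ^ 2 <= / (al + INR k) - / (al + (INR k + 1))).
    { replace ((/ (al + (INR k + 1))) ^ 2) with (/ ((al + (INR k + 1)) ^ 2)) by (field; lra).
      replace (/ (al + INR k) - / (al + (INR k + 1))) with (/ ((al + INR k) * (al + (INR k + 1)))) by (field; lra).
      apply Rinv_le_contravar. apply Rmult_lt_0_compat; lra.
      simpl. nra. }
    lra.
Qed.

Lemma bb_le k : bb k <= 18.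
Proof.
  destruct k as [|k]; simpl. lra.
  assert (/ al <= 2). { replace 2 with (/ (1/2)) by field. apply Rinv_le_contravar; lra. }
  assert (0 < / (al + INR k)) by (apply Rinv_0_lt_compat; pose proof (pos_INR k); lra).
  lra.
Qed.

Lemma rr_bounds_aux k : exp (- bb k) * ww k <= rr k <= exp (bb k) * ww k.
Proof.
  induction k as [|k IH].
  - unfold rr, ww, bb. simpl. replace ((0 + al) / al) with 1 by (field; lra).
    rewrite Rpower_1_base', Ropp_0, exp_0. lra.
  - rewrite rr_S, ww_S. pose proof (uu_pos k) as Hu.
    pose proof (step_up _ Hu). pose proof (step_lo _ Hu). pose proof (bb_S k).
    pose proof (Rpower_pos (1 + uu k) d). pose proof (Rpower_pos ((INR k + al) / al) d).
    fold (ww k) in *.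
    assert (0 < 1 + d * uu k) by nra.
    split.
    + apply Rle_trans with (exp (- bb k) * ww k * (Rpower (1 + uu k) d * exp (- (3 * uu k ^ 2)))).
      * replace (exp (- bb k) * ww k * (Rpower (1 + uu k) d * exp (- (3 * uu k ^ 2))))
          with (exp (- (bb k + 3 * uu k ^ 2)) * (ww k * Rpower (1 + uu k) d))
          by (rewrite Ropp_plus_distr, exp_plus; ring).
        apply Rmult_le_compat_r; [apply Rmult_le_pos; unfold ww; left; apply Rpower_pos|].
        apply exp_le_mono. lra.
      * apply Rmult_le_compat; try lra. apply Rmult_le_pos; [left; apply exp_pos|left; apply Rpower_pos].
        apply Rmult_le_pos; [lra|left; apply exp_pos].
    + apply Rle_trans with (exp (bb k) * ww k * (Rpower (1 + uu k) d * exp (3 * uu k ^ 2))).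
      * destruct IH as [IH1 IH2].
        assert (0 <= rr k).
        { eapply Rle_trans; [|exact IH1]. apply Rmult_le_pos; [left; apply exp_pos|left; apply Rpower_pos]. }
        apply Rmult_le_compat; lra.
      * replace (exp (bb k) * ww k * (Rpower (1 + uu k) d * exp (3 * uu k ^ 2)))
          with (exp (bb k + 3 * uu k ^ 2) * (ww k * Rpower (1 + uu k) d))
          by (rewrite exp_plus; ring).
        apply Rmult_le_compat_r; [apply Rmult_le_pos; unfold ww; left; apply Rpower_pos|].
        apply exp_le_mono. lra.
Qed.

Lemma rr_bounds k : exp (- 18) * ww k <= rr k <= exp 18 * ww k.
Proof.
  destruct (rr_bounds_aux k) as [H1 H2]. pose proof (bb_le k).
  assert (0 < ww k) by apply Rpower_pos.
  split.
  - eapply Rle_trans; [|exact H1]. apply Rmult_le_compat_r; [lra|]. apply exp_le_mono; lra.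
  - eapply Rle_trans; [exact H2|]. apply Rmult_le_compat_r; [lra|]. apply exp_le_mono; lra.
Qed.

End Poch.


Lemma is_series_val (a : nat -> R) l l' : l = l' -> is_series a l -> is_series a l'.
Proof. intros ->; auto. Qed.

Fixpoint ff (k j : nat) : R :=
  match j with O => 1 | S j => INR k * ff (pred k) j end.

Lemma ff_series x j : is_series (fun k => ff k j * (x ^ k / INR (fact k))) (x ^ j * exp x).
Proof.
  induction j as [|j IH].
  - replace (x ^ 0 * exp x) with (exp x) by (simpl; ring).
    eapply is_series_ext; [|apply (exp_series x)]. intros n; simpl; ring.
  - apply is_series_decr_1.
    eapply is_series_val; [|eapply is_series_ext; [|apply (is_series_scal x _ _ IH)]].
    { simpl; unfold plus, opp, scal; simpl; unfold mult; simpl; ring. }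
    intros n. cbn [ff Nat.pred pow]. rewrite fact_simpl, mult_INR, !S_INR.
    unfold scal; simpl; unfold mult; simpl. pose proof (INR_fact_neq_0 n).
    assert (INR n + 1 <> 0) by (pose proof (pos_INR n); lra).
    field. split; auto.
Qed.


Lemma mom2 x : is_series (fun k => (INR k + 1) ^ 2 * (x ^ k / INR (fact k))) ((x ^ 2 + 3 * x + 1) * exp x).
Proof.
  pose proof (is_series_plus _ _ _ _ (ff_series x 2)
     (is_series_plus _ _ _ _ (is_series_scal 3 _ _ (ff_series x 1)) (ff_series x 0))) as H.
  eapply is_series_val; [|eapply is_series_ext; [|exact H]].
  - unfold plus, scal; simpl; unfold mult; simpl. ring.
  - intros k. unfold plus, scal; simpl; unfold mult; simpl.
    destruct k as [|[|k]]; cbn [ff Nat.pred]; rewrite ?S_INR; simpl; try ring.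
Qed.

Lemma mom3 x : is_series (fun k => (INR k + 1) ^ 3 * (x ^ k / INR (fact k)))
   ((x ^ 3 + 6 * x ^ 2 + 7 * x + 1) * exp x).
Proof.
  pose proof (is_series_plus _ _ _ _ (ff_series x 3)
     (is_series_plus _ _ _ _ (is_series_scal 6 _ _ (ff_series x 2))
       (is_series_plus _ _ _ _ (is_series_scal 7 _ _ (ff_series x 1)) (ff_series x 0)))) as H.
  eapply is_series_val; [|eapply is_series_ext; [|exact H]].
  - unfold plus, scal; simpl; unfold mult; simpl. ring.
  - intros k. unfold plus, scal; simpl; unfold mult; simpl.
    destruct k as [|[|[|k]]]; cbn [ff Nat.pred]; rewrite ?S_INR; simpl; try ring.
Qed.


Lemma series_lower (lo a : nat -> R) L : is_series lo L -> ex_series a ->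
  (forall k, lo k <= a k) -> L <= Series a.
Proof.
  intros Hlo Ha Hle. pose proof (Series_correct a Ha) as Hs.
  assert (H := is_lim_seq_le (sum_n lo) (sum_n a) L (Series a)).
  simpl in H. apply H; auto.
  intros n. rewrite !sum_n_Reals. apply sum_Rle. intros; auto.
Qed.

Lemma Rpower_upper_poly s d : 0 < s -> 0 <= d <= 2 -> Rpower s d <= 1 + s ^ 2.
Proof.
  intros Hs Hd. destruct (Rle_or_lt s 1) as [h|h].
  - assert (Rpower s d <= Rpower s 0) by (apply Rpower_le_exp_small; lra).
    rewrite Rpower_O in H by lra. nra.
  - assert (Rpower s d <= Rpower s 2) by (apply Rle_Rpower; lra).
    rewrite Rpower_2 in H by lra. lra.
Qed.

Lemma Rpower_lower_poly s d : 0 < s -> 0 <= d <= 2 -> s ^ 2 - s ^ 3 / 2 <= Rpower s d.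
Proof.
  intros Hs Hd. destruct (Rle_or_lt s 1) as [h|h].
  - assert (Rpower s 2 <= Rpower s d) by (apply Rpower_le_exp_small; lra).
    rewrite Rpower_2 in H by lra. assert (0 <= s ^ 3) by (apply pow_le; lra). lra.
  - assert (Rpower s 0 <= Rpower s d) by (apply Rle_Rpower; lra).
    rewrite Rpower_O in H by lra.
    assert (0 <= s * (s - 4/3) ^ 2) by (apply Rmult_le_pos; [lra | apply pow2_ge_0]).
    assert (s ^ 2 - s ^ 3 / 2 <= 1) by (simpl in *; nra). lra.
Qed.

Section MB.
Variables al d x : R.
Hypothesis Hal : 1/2 <= al < 1.
Hypothesis Hd : 0 <= d <= 3/2.
Hypothesis Hx : 1 <= x.

Definition aa k := rr al d k * (x ^ k / INR (fact k)).

Lemma xk_pos k : 0 < x ^ k / INR (fact k).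
Proof. apply Rdiv_lt_0_compat. apply pow_lt; lra. apply INR_fact_lt_0. Qed.

Lemma rr_pos k : 0 < rr al d k.
Proof. unfold rr. apply Rdiv_lt_0_compat; apply poch_pos; lra. Qed.

Lemma aa_pos k : 0 <= aa k.
Proof. unfold aa. pose proof (xk_pos k). pose proof (rr_pos k). nra. Qed.

Lemma ww_upper k : ww al d k <= Rpower x d * (1 + 4 / x ^ 2 * (INR k + 1) ^ 2).
Proof.
  unfold ww. pose proof (pos_INR k).
  set (t := (INR k + al) / (al * x)).
  assert (Ht : 0 < t) by (unfold t; apply Rdiv_lt_0_compat; nra).
  replace ((INR k + al) / al) with (x * t) by (unfold t; field; lra).
  rewrite <- Rpower_mult_distr by lra.
  apply Rmult_le_compat_l; [left; apply Rpower_pos|].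
  eapply Rle_trans; [apply Rpower_upper_poly; lra|].
  assert (t <= 2 * (INR k + 1) / x).
  { unfold t. apply Rmult_le_reg_r with (al * x); [nra|].
    replace ((INR k + al) / (al * x) * (al * x)) with (INR k + al) by (field; lra).
    replace (2 * (INR k + 1) / x * (al * x)) with (2 * al * (INR k + 1)) by (field; lra). nra. }
  assert (t ^ 2 <= 4 / x ^ 2 * (INR k + 1) ^ 2).
  { replace (4 / x ^ 2 * (INR k + 1) ^ 2) with ((2 * (INR k + 1) / x) ^ 2) by (field; lra).
    apply pow_incr; lra. }
  lra.
Qed.

Lemma ww_lower k : Rpower x d * ((INR k + 1) ^ 2 / x ^ 2 - (INR k + 1) ^ 3 / (2 * x ^ 3)) <= ww al d k.
Proof.
  unfold ww. pose proof (pos_INR k).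
  apply Rle_trans with (Rpower (INR k + 1) d).
  - set (s := (INR k + 1) / x).
    assert (Hs : 0 < s) by (unfold s; apply Rdiv_lt_0_compat; lra).
    replace (INR k + 1) with (x * s) at 3 by (unfold s; field; lra).
    rewrite <- Rpower_mult_distr by lra.
    apply Rmult_le_compat_l; [left; apply Rpower_pos|].
    replace ((INR k + 1) ^ 2 / x ^ 2 - (INR k + 1) ^ 3 / (2 * x ^ 3)) with (s ^ 2 - s ^ 3 / 2)
      by (unfold s; field; lra).
    apply Rpower_lower_poly; lra.
  - apply Rle_Rpower_l; [lra|]. split; [lra|].
    apply Rmult_le_reg_r with al; [lra|].
    replace ((INR k + al) / al * al) with (INR k + al) by (field; lra). nra.
Qed.

Lemma ww_ge1 k : 1 <= ww al d k.
Proof.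
  unfold ww. pose proof (pos_INR k).
  assert (Rpower 1 d <= Rpower ((INR k + al) / al) d).
  { apply Rle_Rpower_l; [lra|]. split; [lra|].
    apply Rmult_le_reg_r with al; [lra|].
    replace ((INR k + al) / al * al) with (INR k + al) by (field; lra). lra. }
  rewrite Rpower_1_base' in H0. auto.
Qed.

Definition hi k := exp 18 * Rpower x d * ((1 + 4 / x ^ 2 * (INR k + 1) ^ 2) * (x ^ k / INR (fact k))).

Lemma hi_series : is_series hi (exp 18 * Rpower x d * (exp x + 4 / x ^ 2 * ((x ^ 2 + 3 * x + 1) * exp x))).
Proof.
  unfold hi.
  pose proof (is_series_scal (exp 18 * Rpower x d) _ _
     (is_series_plus _ _ _ _ (exp_series x) (is_series_scal (4 / x ^ 2) _ _ (mom2 x)))) as H.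
  eapply is_series_ext; [|exact H]. intros k. unfold plus, scal; simpl; unfold mult; simpl. ring.
Qed.

Lemma aa_le_hi k : aa k <= hi k.
Proof.
  unfold aa, hi. destruct (rr_bounds al d Hal Hd k) as [_ H2].
  pose proof (ww_upper k). pose proof (xk_pos k). pose proof (exp_pos 18).
  replace (exp 18 * Rpower x d * ((1 + 4 / x ^ 2 * (INR k + 1) ^ 2) * (x ^ k / INR (fact k))))
    with (exp 18 * (Rpower x d * (1 + 4 / x ^ 2 * (INR k + 1) ^ 2)) * (x ^ k / INR (fact k))) by ring.
  apply Rmult_le_compat_r; [lra|].
  eapply Rle_trans; [exact H2|]. apply Rmult_le_compat_l; lra.
Qed.

Lemma aa_ex : ex_series aa.
Proof.
  apply (ex_series_le aa hi). intros n. unfold norm; simpl. unfold abs; simpl.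
  rewrite Rabs_right by (apply Rle_ge, aa_pos). apply aa_le_hi.
  eexists; apply hi_series.
Qed.

Lemma aa_upper : Series aa <= 21 * exp 18 * Rpower x d * exp x.
Proof.
  eapply Rle_trans.
  - apply Series_le. intros n; split; [apply aa_pos|apply aa_le_hi].
    eexists; apply hi_series.
    change (Series (fun n => hi n)) with (Series hi). rewrite (is_series_unique _ _ hi_series).
    pose proof (exp_pos 18). pose proof (Rpower_pos x d). pose proof (exp_pos x).
    assert (4 / x ^ 2 * (x ^ 2 + 3 * x + 1) <= 20).
    { apply Rmult_le_reg_r with (x ^ 2); [nra|].
      replace (4 / x ^ 2 * (x ^ 2 + 3 * x + 1) * x ^ 2) with (4 * (x ^ 2 + 3 * x + 1)) by (field; lra).
      nra. }
    assert (exp 18 * Rpower x d * exp x * (4 / x ^ 2 * (x ^ 2 + 3 * x + 1)) <=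
            exp 18 * Rpower x d * exp x * 20).
    { apply Rmult_le_compat_l; [|lra]. left. repeat apply Rmult_lt_0_compat; auto. }
    nra.
Qed.

Definition lo k := exp (- 18) * Rpower x d *
  ((INR k + 1) ^ 2 * (x ^ k / INR (fact k)) / x ^ 2 - (INR k + 1) ^ 3 * (x ^ k / INR (fact k)) / (2 * x ^ 3)).

Lemma lo_series : is_series lo (exp (- 18) * Rpower x d *
   ((x ^ 2 + 3 * x + 1) * exp x / x ^ 2 - (x ^ 3 + 6 * x ^ 2 + 7 * x + 1) * exp x / (2 * x ^ 3))).
Proof.
  unfold lo.
  pose proof (is_series_scal (exp (- 18) * Rpower x d) _ _
     (is_series_minus _ _ _ _ (is_series_scal (/ x ^ 2) _ _ (mom2 x))
                              (is_series_scal (/ (2 * x ^ 3)) _ _ (mom3 x)))) as H.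
  eapply is_series_val; [|eapply is_series_ext; [|exact H]].
  - unfold plus, opp, scal; simpl; unfold mult; simpl. field. lra.
  - intros k. unfold plus, opp, scal; simpl; unfold mult; simpl. pose proof (INR_fact_neq_0 k). field; repeat split; try lra.
Qed.

Lemma lo_le_aa k : lo k <= aa k.
Proof.
  unfold lo, aa. destruct (rr_bounds al d Hal Hd k) as [H1 _].
  pose proof (ww_lower k). pose proof (xk_pos k). pose proof (exp_pos (-18)).
  replace (exp (- 18) * Rpower x d *
    ((INR k + 1) ^ 2 * (x ^ k / INR (fact k)) / x ^ 2 -
     (INR k + 1) ^ 3 * (x ^ k / INR (fact k)) / (2 * x ^ 3)))
   with (exp (- 18) * (Rpower x d * ((INR k + 1) ^ 2 / x ^ 2 - (INR k + 1) ^ 3 / (2 * x ^ 3)))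
          * (x ^ k / INR (fact k))) by (pose proof (INR_fact_neq_0 k); field; repeat split; lra).
  apply Rmult_le_compat_r; [lra|].
  eapply Rle_trans; [|exact H1]. apply Rmult_le_compat_l; lra.
Qed.

Lemma aa_lower : exp (- 18) / 16 * Rpower x d * exp x <= Series aa.
Proof.
  pose proof (exp_pos (-18)). pose proof (Rpower_pos x d). pose proof (exp_pos x).
  destruct (Rle_or_lt 4 x) as [h|h].
  - eapply Rle_trans; [|apply (series_lower lo aa _ lo_series aa_ex lo_le_aa)].
    assert (1/4 <= (x ^ 2 + 3 * x + 1) / x ^ 2 - (x ^ 3 + 6 * x ^ 2 + 7 * x + 1) / (2 * x ^ 3)).
    { replace ((x ^ 2 + 3 * x + 1) / x ^ 2 - (x ^ 3 + 6 * x ^ 2 + 7 * x + 1) / (2 * x ^ 3))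
        with (1/2 - 5 / (2 * x ^ 2) - 1 / (2 * x ^ 3)) by (field; lra).
      assert (5 / (2 * x ^ 2) <= 5 / 32).
      { apply Rmult_le_compat_l; [lra|]. apply Rinv_le_contravar; [lra|]. nra. }
      assert (1 / (2 * x ^ 3) <= 1 / 128).
      { apply Rmult_le_compat_l; [lra|]. apply Rinv_le_contravar; [lra|].
        assert (16 <= x ^ 2) by nra. simpl. nra. }
      lra. }
    replace (exp (- 18) * Rpower x d *
      ((x ^ 2 + 3 * x + 1) * exp x / x ^ 2 - (x ^ 3 + 6 * x ^ 2 + 7 * x + 1) * exp x / (2 * x ^ 3)))
     with (exp (- 18) * Rpower x d * exp x *
      ((x ^ 2 + 3 * x + 1) / x ^ 2 - (x ^ 3 + 6 * x ^ 2 + 7 * x + 1) / (2 * x ^ 3))) by (field; lra).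
    assert (0 < exp (- 18) * Rpower x d * exp x) by (repeat apply Rmult_lt_0_compat; auto).
    nra.
  - eapply Rle_trans; [|apply (series_lower (fun k => exp (-18) * (x ^ k / INR (fact k))) aa _
          (is_series_scal (exp (-18)) _ _ (exp_series x)) aa_ex)].
    + unfold scal; simpl; unfold mult; simpl.
      assert (Rpower x d <= 16).
      { assert (Rpower x d <= Rpower x 2) by (apply Rle_Rpower; lra).
        rewrite Rpower_2 in H2 by lra. nra. }
      assert (exp (- 18) / 16 * Rpower x d <= exp (-18)).
      { unfold Rdiv. nra. }
      nra.
    + intros k. unfold aa. destruct (rr_bounds al d Hal Hd k) as [G1 _].
      pose proof (ww_ge1 k). pose proof (xk_pos k).
      apply Rmult_le_compat_r; [lra|]. nra.
Qed.

End MB.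


Theorem lemma4p8 (n : nat) (hn : (2 <= n)%nat) :
  let alpha := 1 - / INR n in
  exists Cn : R, 0 < Cn /\
    forall beta y : R,
      beta <= 0 -> alpha - beta - 1 <= 1 -> y <= -1 ->
      / Cn * exp y * Rpower (- y) (beta - alpha) <= kummerT beta alpha y /\
      kummerT beta alpha y <= exp y * Rpower (- y) (beta - alpha) /\
      / Cn * Rpower (- y) (- beta) <= kummerM beta alpha y /\
      kummerM beta alpha y <= Cn * Rpower (- y) (- beta).
Proof.
  intros alpha.
  assert (Hn : 2 <= INR n) by (replace 2 with (INR 2) by (simpl; lra); apply le_INR; auto).
  assert (Hal : 1/2 <= alpha < 1).
  { unfold alpha. assert (/ INR n <= / 2) by (apply Rinv_le_contravar; lra).
    assert (0 < / INR n) by (apply Rinv_0_lt_compat; lra). lra. }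
  pose proof (exp_pos 18) as E18.
  assert (E1 : 1 <= exp 18) by (rewrite <- exp_0; apply exp_le_mono; lra).
  exists (336 * exp 18). split; [lra|].
  intros beta y Hb HQ Hy.
  assert (Hbe : alpha - 2 <= beta <= 0) by lra.
  destruct (T_bounds alpha beta y Hal Hbe Hy) as [T1 T2].
  pose proof (exp_pos y). pose proof (Rpower_pos (- y) (beta - alpha)).
  assert (Hc : / (336 * exp 18) <= / 288).
  { apply Rinv_le_contravar; lra. }
  set (d := - beta). set (x := - y).
  assert (Hd : 0 <= d <= 3/2) by (unfold d; lra).
  assert (Hx : 1 <= x) by (unfold x; lra).
  assert (HM : kummerM beta alpha y = exp y * Series (aa alpha d x)).
  { replace beta with (alpha - (alpha + d)) at 1 by (unfold d; ring).
    apply kummer_transf.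
    - lra.
    - intros k. unfold aa, rr. fold x. unfold Rdiv. ring.
    - apply aa_ex; auto.
    - intros k. apply aa_pos; auto. }
  pose proof (aa_upper alpha d x Hal Hd Hx) as U.
  pose proof (aa_lower alpha d x Hal Hd Hx) as L.
  assert (Exy : exp y * exp x = 1) by (unfold x; rewrite <- exp_plus; replace (y + - y) with 0 by ring; apply exp_0).
  assert (Em : exp (- 18) * exp 18 = 1) by (rewrite <- exp_plus; replace (- 18 + 18) with 0 by ring; apply exp_0).
  pose proof (Rpower_pos x d) as Px.
  fold x. fold d.
  split; [|split; [|split]].
  - eapply Rle_trans; [|exact T1].
    apply Rmult_le_compat_r; [lra|]. apply Rmult_le_compat_r; lra.
  - exact T2.
  - rewrite HM.
    apply Rle_trans with (exp y * (exp (- 18) / 16 * Rpower x d * exp x)).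
    + replace (exp y * (exp (- 18) / 16 * Rpower x d * exp x)) with (exp (- 18) / 16 * Rpower x d)
        by (transitivity (exp (-18) / 16 * Rpower x d * (exp y * exp x)); [rewrite Exy; ring | ring]).
      apply Rmult_le_compat_r; [lra|].
      assert (exp (-18) = / exp 18) by (apply Rmult_eq_reg_r with (exp 18); [rewrite Em, Rinv_l; lra | lra]).
      rewrite H1. rewrite Rinv_mult. unfold Rdiv.
      assert (/ 336 <= / 16) by (apply Rinv_le_contravar; lra).
      assert (0 < / exp 18) by (apply Rinv_0_lt_compat; lra). nra.
    + apply Rmult_le_compat_l; lra.
  - rewrite HM.
    apply Rle_trans with (exp y * (21 * exp 18 * Rpower x d * exp x)).
    + apply Rmult_le_compat_l; lra.
    + replace (exp y * (21 * exp 18 * Rpower x d * exp x)) with (21 * exp 18 * Rpower x d)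
        by (transitivity (21 * exp 18 * Rpower x d * (exp y * exp x)); [rewrite Exy; ring | ring]).
      nra.
Qed.
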